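(* Let $K$ be an abstract simplicial complex with vertex set $\{1,\ldots,m\}$ and $\underline{G}=\{(G_i,e_i)\}_{i=1}^m$ a family of locally compact connected $\mathrm{CW}$ topological groups ($e_i$ the neutral element of $G_i$) which is LS-logarithmic, i.e. $\mathsf{cat}(G_{i_1}\times\cdots\times G_{i_k})=\sum_{j=1}^k\mathsf{cat}(G_{i_j})$ for every $1\le i_1<\cdots<i_k\le m$. Then $$\mathsf{TC}(\underline{G}^K)\ \ge\ \max\Big\{\sum_{i\in\sigma_1\cup\sigma_2}\mathsf{cat}(G_i)\colon\sigma_1,\sigma_2\in K\Big\}.$$
   Context: $\mathsf{cat}$ is the reduced Lusternik–Schnirelmann category. $\mathsf{TC}(X)$ is Farber's (reduced) topological complexity: the least $n$ such that $X\times X$ has an open cover $\{U_0,\ldots,U_n\}$ with a continuous section on each $U_i$ of $e_{01}\colon X^{[0,1]}\to X\times X$, $\gamma\mapsto(\gamma(0),\gamma(1))$. The polyhedral product is $\underline{G}^K=\bigcup_{\sigma\in K}\underline{G}^{\sigma}\subseteq\prod_{i=1}^m G_i$, where $\underline{G}^{\sigma}=\prod_{i=1}^m Y_i$ with $Y_i=G_i$ if $i\in\sigma$ and $Y_i=\{e_i\}$ otherwise. *)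

(* Defs.v *)
From HB Require Import structures.
From mathcomp Require Import all_boot all_order all_algebra.
From mathcomp Require Import all_classical all_reals all_analysis.
Set Implicit Arguments. Unset Strict Implicit. Unset Printing Implicit Defensive.
Import Order.TTheory GRing.Theory Num.Theory.
Local Open Scope classical_set_scope.
Local Open Scope ring_scope.

Section Defs.
Variable R : realType.

Definition unitI : set R^o := [set t | 0 <= t <= 1].

Definition disk (n : nat) : set 'rV[R^o]_n :=
  [set v | \sum_(i < n) v ord0 i ^+ 2 <= 1].
Definition open_disk (n : nat) : set 'rV[R^o]_n :=
  [set v | \sum_(i < n) v ord0 i ^+ 2 < 1].
Definition sphere (n : nat) : set 'rV[R^o]_n :=
  [set v | \sum_(i < n) v ord0 i ^+ 2 = 1].

(* CW complex structure on a space X: Hausdorff, partitioned into open cells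
   e_j = phi_j(open disk) with characteristic maps phi_j continuous on the
   closed disk, homeomorphisms from the open disk onto e_j, closure-finite
   (boundary sphere mapped into finitely many cells of lower dimension) and
   with the weak topology. *)
Definition CW_complex (X : topologicalType) : Prop :=
  hausdorff_space X /\
  exists (I : Type) (dim : I -> nat) (phi : forall j, 'rV[R^o]_(dim j) -> X),
    let cell j := phi j @` @open_disk (dim j) in
    (forall j, {within @disk (dim j), continuous (phi j)}) /\
    (forall x, exists j, cell j x) /\
    (forall j k x, cell j x -> cell k x -> j = k) /\
    (forall j, exists psi : X -> 'rV[R^o]_(dim j),
        (forall v, @open_disk (dim j) v -> psi (phi j v) = v) /\
        {within cell j, continuous psi}) /\
    (forall j, exists F : set I, finite_set F /\
        (forall k, F k -> (dim k < dim j)%N) /\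
        phi j @` @sphere (dim j) `<=` \bigcup_(k in F) cell k) /\
    (forall C : set X,
        (forall j, closed (C `&` phi j @` @disk (dim j))) -> closed C).

Definition topgroup (T : topologicalType) (mul : T -> T -> T) (inv : T -> T)
  (e : T) : Prop :=
  associative mul /\ left_id e mul /\ left_inverse e inv mul /\
  continuous (fun p : T * T => mul p.1 p.2) /\ continuous inv.

Definition rel_open (X : topologicalType) (A U : set X) : Prop :=
  exists V, open V /\ U = A `&` V.

Definition null_in (X : topologicalType) (A U : set X) : Prop :=
  exists H : X * R^o -> X,
    {within U `*` unitI, continuous H} /\
    (forall x t, U x -> unitI t -> A (H (x, t))) /\
    (forall x, U x -> H (x, 0) = x) /\
    (exists c, forall x, U x -> H (x, 1) = c).

(* reduced LS category of the subspace A of X *)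
Definition LScat_le (X : topologicalType) (A : set X) (n : nat) : Prop :=
  exists U : 'I_n.+1 -> set X,
    (forall i, rel_open A (U i)) /\ A `<=` \bigcup_i U i /\
    (forall i, null_in A (U i)).

Definition LScat (X : topologicalType) (A : set X) : \bar R :=
  ereal_inf [set (n%:R)%:E | n in LScat_le A].

(* reduced topological complexity of the subspace A of X: a continuous section
   of e01 : A^[0,1] -> A x A over U is written, via the exponential law, as a
   continuous map s : U x [0,1] -> A with s(p,0) = p.1, s(p,1) = p.2 *)
Definition TC_le (X : topologicalType) (A : set X) (n : nat) : Prop :=
  exists U : 'I_n.+1 -> set (X * X),
    (forall i, rel_open (A `*` A) (U i)) /\ A `*` A `<=` \bigcup_i U i /\
    (forall i, exists s : (X * X) * R^o -> X,
        {within U i `*` unitI, continuous s} /\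
        (forall p t, U i p -> unitI t -> A (s (p, t))) /\
        (forall p, U i p -> s (p, 0) = p.1 /\ s (p, 1) = p.2)).

Definition TC (X : topologicalType) (A : set X) : \bar R :=
  ereal_inf [set (n%:R)%:E | n in TC_le A].

End Defs.

Definition simplicial_complex (m : nat) (K : {set {set 'I_m}}) : Prop :=
  (finset.set0 \in K) /\
  (forall s t : {set 'I_m}, s \in K -> t \subset s -> t \in K) /\
  (forall i : 'I_m, [set i]%SET \in K).

Definition poly_cell (m : nat) (G : 'I_m -> topologicalType)
  (e : forall i, G i) (s : {set 'I_m}) : set (prod_topology G) :=
  [set x | forall i, i \notin s -> x i = e i].

Definition poly_prod (m : nat) (G : 'I_m -> topologicalType)
  (e : forall i, G i) (K : {set {set 'I_m}}) : set (prod_topology G) :=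
  \bigcup_(s in [set s | s \in K]) poly_cell e s.

(* Main.v *)
Require Import Defs.
From HB Require Import structures.
From mathcomp Require Import all_boot all_order all_algebra.
From mathcomp Require Import all_classical all_reals all_analysis.
Import Order.TTheory GRing.Theory Num.Theory.
Local Open Scope classical_set_scope.
Local Open Scope ring_scope.

Lemma prod_cvg (I : eqType) (T : I -> topologicalType)
  (F : set_system (prod_topology T)) (f : prod_topology T) :
  Filter F -> (forall i, (fun g : prod_topology T => g i) @ F --> f i) -> F --> f.
Proof.
move=> FF H.
apply/cvg_sup => i.
rewrite cvg_image; last first.
  rewrite eqEsubset; split=> y // _; exists (dfwith f i y) => //.
  by rewrite dfwithin.
move=> W /= /H; rewrite nbhs_simpl /= => FW.
exists ((fun g : prod_topology T => g i) @^-1` W) => //.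
rewrite eqEsubset; split => [y [g + <-] //|y Wy].
by exists (dfwith f i y); rewrite /= dfwithin.
Qed.

Lemma continuous_coord (I : eqType) (T : I -> topologicalType) (Y : topologicalType)
  (h : Y -> prod_topology T) :
  (forall i, continuous (fun y => h y i)) -> continuous h.
Proof.
move=> H y; apply: prod_cvg => i.
exact: (H i y).
Qed.

Lemma continuous_proj (I : eqType) (T : I -> topologicalType) i :
  continuous (fun g : prod_topology T => g i).
Proof. exact: proj_continuous. Qed.

Lemma within_comp {T U W : topologicalType} (A : set T) (B : set U)
  (f : T -> U) (g : U -> W) :
  {within A, continuous f} -> {within B, continuous g} ->
  (forall x, A x -> B (f x)) -> {within A, continuous (g \o f)}.
Proof.
move=> /continuousP cf /continuousP cg fAB; apply/continuousP => O oO.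
have /open_subspaceP [V oV VB] := cg O oO.
have /open_subspaceP [V' oV' V'A] := cf V oV.
apply/open_subspaceP; exists V' => //.
rewrite V'A; rewrite eqEsubset; split => x [Vx Ax]; split => //.
  have : (V `&` B) (f x) by split => //; exact: fAB.
  by rewrite VB => -[].
have : (g @^-1` O `&` B) (f x) by split => //; exact: fAB.
by rewrite -VB => -[].
Qed.

Section grp.
Variables (T : Type) (mul : T -> T -> T) (inv : T -> T) (e : T).
Hypotheses (mA : associative mul) (m1 : left_id e mul) (mV : left_inverse e inv mul).
Lemma mulgV' x : mul x (inv x) = e.
Proof.
have h : mul (inv (inv x)) (inv x) = e by exact: mV.
transitivity (mul (mul (inv (inv x)) (inv x)) (mul x (inv x))).
  by rewrite h m1.
by rewrite -mA (mA (inv x)) mV m1 h.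
Qed.
Lemma mulg1' x : mul x e = x.
Proof. by rewrite -(mV x) mA mulgV' m1. Qed.
Lemma invgK' x : inv (inv x) = x.
Proof. by rewrite -[inv (inv x)]mulg1' -(mV x) mA mV m1. Qed.
Lemma invg1' : inv e = e.
Proof. by rewrite -[inv e]mulg1' mV. Qed.
End grp.
Lemma cont2 {T V W U : topologicalType} (h : V -> W -> U) (u : T -> V) (v : T -> W) :
  continuous (fun q : V * W => h q.1 q.2) -> continuous u -> continuous v ->
  continuous (fun p => h (u p) (v p)).
Proof. by move=> ch cu cv x; apply: continuous2_cvg (ch _) (cu x) (cv x). Qed.

Lemma pair_cont {T V W : topologicalType} (u : T -> V) (v : T -> W) :
  continuous u -> continuous v -> continuous (fun p => (u p, v p)).
Proof. by move=> cu cv x; exact: (cvg_pair (cu x) (cv x)). Qed.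

Lemma key (R : realType) (m : nat) (K : {set {set 'I_m}})
  (G : 'I_m -> topologicalType)
  (mul : forall i, G i -> G i -> G i) (inv : forall i, G i -> G i)
  (e : forall i, G i) :
  (forall i, topgroup (mul i) (inv i) (e i)) ->
  forall s1 s2 : {set 'I_m}, s1 \in K -> s2 \in K -> forall n,
  TC_le R (poly_prod e K) n -> LScat_le R (poly_cell e (s1 :|: s2)%SET) n.
Proof.
move=> Hg s1 s2 h1 h2 n [U [Uo [Ucov Us]]].
pose X := prod_topology G.
pose S := (s1 :|: s2)%SET.
pose a := fun x : X => (fun i => if i \in s1 then inv i (x i) else e i) : X.
pose b := fun x : X => (fun i => if i \in s1 then e i else x i) : X.
pose f := fun x : X => (a x, b x).
pose C := poly_cell e S.
have ca : continuous a.
  apply: continuous_coord => i; rewrite /a /=; case: (boolP (i \in s1)) => hi.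
    move=> y; apply: continuous_comp; first exact: continuous_proj.
    by case: (Hg i) => _ [_ [_ [_ ci]]]; exact: ci.
  exact: cst_continuous.
have cb : continuous b.
  apply: continuous_coord => i; rewrite /b /=; case: (boolP (i \in s1)) => hi.
    exact: cst_continuous.
  exact: continuous_proj.
have fc : continuous f by move=> x; exact: (cvg_pair (ca x) (cb x)).
have fA : forall x, C x -> (poly_prod e K `*` poly_prod e K) (f x).
  move=> x Cx; split.
    exists s1 => // i hi; by rewrite /f /a /= (negbTE hi).
  exists s2 => // i hi; rewrite /f /b /=; case: ifP => // hi1.
  by apply: Cx; rewrite /S finset.in_setU negb_or hi1 hi.
exists (fun j => C `&` f @^-1` U j); split; [|split].
- move=> j; have [Wj [oW hU]] := Uo j; exists (f @^-1` Wj); split.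
    by move: fc => /continuousP; apply.
  rewrite hU; apply/seteqP; split => x [Cx hx]; split => //.
    by case: hx.
  by split => //; exact: fA.
- by move=> x Cx; have [j _ Ujx] := Ucov _ (fA x Cx); exists j.
move=> j; have [s [sc [_ sE]]] := Us j.
pose g2 := fun p : X * R^o => (p.1, s (f p.1, p.2)).
pose Phi := fun q : X * X =>
  (fun i => if i \in S then mul i (inv i (q.2 i)) (b q.1 i) else e i) : X.
exists (Phi \o g2); split; [|split; [|split]].
- apply: (@within_comp _ _ _ _ setT); last by [].
  + apply: (pair_cont (from_subspace _ fst)
      (from_subspace _ (s \o (fun p : X * R^o => (f p.1, p.2))))).
      by apply: continuous_subspaceT => p; exact: cvg_fst.
    apply: (@within_comp _ _ _ _ (U j `*` @unitI R)) => //.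
      apply: continuous_subspaceT.
      apply: pair_cont; last by move=> p; exact: cvg_snd.
      by move=> p; apply: continuous_comp; [exact: cvg_fst | exact: fc].
    by move=> p [[_ Up] It]; split.
  + apply: continuous_subspaceT.
    apply: continuous_coord => i; rewrite /Phi /=.
    case: (boolP (i \in S)) => hi; last exact: cst_continuous.
    have [_ [_ [_ [cm ci]]]] := Hg i.
    apply: (cont2 (mul i) (fun q : X * X => inv i (q.2 i)) (fun q : X * X => b q.1 i)) => //.
      move=> q; apply: (@continuous_comp _ _ _ (fun q : X * X => q.2 i) (inv i)); last exact: ci.
      by apply: (@continuous_comp _ _ _ snd (fun g : X => g i)); [exact: cvg_snd | exact: continuous_proj].
    move=> q; apply: (@continuous_comp _ _ _ fst (fun g : X => b g i)); first exact: cvg_fst.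
    by apply: (@continuous_comp _ _ _ b (fun g : X => g i)); [exact: cb | exact: continuous_proj].
- move=> x t [Cx _] _ i hi; by rewrite /Phi /= (negbTE hi).
- move=> x [Cx Ux]; rewrite /Phi /g2 /= (proj1 (sE _ Ux)).
  apply: functional_extensionality_dep => i /=.
  have [mA [m1 [mV _]]] := Hg i.
  rewrite /a /b /=; case: ifP => hS; last by apply/esym/Cx; rewrite hS.
  case: ifP => _.
    by rewrite (@invgK' _ _ _ _ mA m1 mV) (@mulg1' _ _ _ _ mA m1 mV).
  by rewrite (@invg1' _ _ _ _ mA m1 mV) m1.
- exists (fun i => e i : G i) => x [Cx Ux].
  rewrite /Phi /g2 /= (proj2 (sE _ Ux)).
  apply: functional_extensionality_dep => i /=.
  have [mA [m1 [mV _]]] := Hg i.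
  by case: ifP => // _; exact: mV.
Qed.

Theorem lemma5p5 (R : realType) (m : nat) (K : {set {set 'I_m}})
  (G : 'I_m -> topologicalType)
  (mul : forall i, G i -> G i -> G i) (inv : forall i, G i -> G i)
  (e : forall i, G i) :
  simplicial_complex K ->
  (forall i, topgroup (mul i) (inv i) (e i)) ->
  (forall i, locally_compact [set: G i]) ->
  (forall i, connected [set: G i]) ->
  (forall i, CW_complex R (G i)) ->
  (forall S : {set 'I_m}, S != finset.set0 ->
     LScat R (poly_cell e S) = (\sum_(i in S) LScat R [set: G i])%E) ->
  forall s1 s2 : {set 'I_m}, s1 \in K -> s2 \in K ->
    ((\sum_(i in (s1 :|: s2)%SET) LScat R [set: G i]) <= TC R (poly_prod e K))%E.
Proof.
move=> HK Hg _ _ _ Hlog s1 s2 h1 h2.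
rewrite /TC; apply: le_ereal_inf_tmp => y [n hn <-].
case: (eqVneq (s1 :|: s2)%SET finset.set0) => [E|NE].
  by rewrite E big_set0 lee_fin.
rewrite -Hlog //; rewrite /LScat; apply: ereal_inf_lbound; exists n => //.
exact: (@key R m K G mul inv e Hg s1 s2 h1 h2 n hn).
Qed.
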